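(* For all $n\in\mathbb{N}$, $D_n\equiv 1\pmod 3$.
   Context: For $n\in\mathbb{N}$, the Domb numbers are $D_n=\sum_{k=0}^n\binom{n}{k}^2\binom{2k}{k}\binom{2(n-k)}{n-k}$. *)

(* Defs.v *)
From mathcomp Require Import all_boot.

Definition domb (n : nat) : nat :=
  \sum_(0 <= k < n.+1) 'C(n, k) ^ 2 * 'C(2 * k, k) * 'C(2 * (n - k), n - k).

(* Main.v *)
Require Import Defs.
From mathcomp Require Import all_boot.
From mathcomp Require Import all_algebra zify ring.
Import GRing.Theory.
Section Aux.
Local Open Scope ring_scope.

Local Notation c n k := ('C(n, k)%:R : 'Z_3).

Lemma pascal3 n k : 'C(n.+3, k.+3) = ('C(n, k.+3) + 3 * 'C(n, k.+2) + 3 * 'C(n, k.+1) + 'C(n, k))%N.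
Proof. rewrite !binS; lia. Qed.

Lemma three0 : (3%:R : 'Z_3) = 0. Proof. by apply/eqP. Qed.

Lemma nat3 n : (n.+3%:R : 'Z_3) = n%:R.
Proof.
rewrite -!natr1 -!addrA.
have -> : (1 + (1 + 1) : 'Z_3) = 0 by apply/eqP.
by rewrite addr0.
Qed.

Lemma lowk n k : (k < 3)%N -> c (n.+3) k = c n k.
Proof.
case: k => [|[|[|]]] // _.
- by rewrite !bin0.
- by rewrite !bin1 nat3.
- rewrite !binS !bin1 bin0 !natrD -!natr1.
  have h3 : (1 + 1 + 1 : 'Z_3) = 0 by apply/eqP.
  transitivity (c n 2 + (1 + 1 + 1) * ((n%:R : 'Z_3) + 1)); last by rewrite h3; ring.
  ring.
Qed.

Lemma lucas a b r s : (r < 3)%N -> (s < 3)%N ->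
  c (3 * a + r) (3 * b + s) = c a b * c r s.
Proof.
move=> hr hs; elim: a b => [|a IH] b.
- case: b => [|b]; first by rewrite !muln0 !add0n bin0 mul1r.
  rewrite muln0 add0n bin_small; last by lia.
  by rewrite bin_small ?mul0r.
- have -> : (3 * a.+1 + r = (3 * a + r).+3)%N by lia.
  case: b => [|b].
  + by rewrite muln0 !add0n lowk // -(add0n s) -(muln0 3) IH !bin0.
  + have -> : (3 * b.+1 + s = (3 * b + s).+3)%N by lia.
    rewrite pascal3 [in RHS]binS.
    have -> : ((3 * b + s).+3 = 3 * b.+1 + s)%N by lia.
    rewrite !(natrD, natrM) three0 !mul0r !addr0 !IH; ring.
Qed.

Lemma cb2 j s : (s < 3)%N -> c (2 * (3 * j + s)) (3 * j + s) = c (2 * j) j * c (2 * s) s.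
Proof.
move=> hs; case: s hs => [|[|[|]]] // _.
- have -> : (2 * (3 * j + 0) = 3 * (2 * j) + 0)%N by lia.
  by rewrite lucas.
- have -> : (2 * (3 * j + 1) = 3 * (2 * j) + 2)%N by lia.
  by rewrite lucas.
- have -> : (2 * (3 * j + 2) = 3 * (2 * j).+1 + 1)%N by lia.
  rewrite lucas //.
  have -> : c 1 2 = 0 by apply/eqP.
  rewrite mulr0.
  have -> : c (2 * 2) 2 = 0 by apply/eqP.
  by rewrite mulr0.
Qed.

Definition T (n k : nat) : nat :=
  ('C(n, k) ^ 2 * 'C(2 * k, k) * 'C(2 * (n - k), n - k))%N.

Lemma Tmul m r j s : (r < 3)%N -> (s < 3)%N ->
  ((T (3 * m + r) (3 * j + s))%:R : 'Z_3) = (T m j)%:R * (T r s)%:R.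
Proof.
move=> hr hs; rewrite /T !(natrX, natrM).
have hb := (@lucas m j r s hr hs).
case: (boolP ((s <= r) && (j <= m))%N) => [/andP [sr jm] | H].
- have -> : (3 * m + r - (3 * j + s) = 3 * (m - j) + (r - s))%N by lia.
  rewrite hb cb2 // cb2 ?lucas //; last by lia.
  ring.
- have H0 : c m j * c r s = 0.
    case/nandP: H; rewrite -ltnNge => h.
    + by rewrite (bin_small h) mulr0n mulr0.
    + by rewrite (bin_small h) mulr0n mul0r.
  rewrite hb.
  transitivity ((c m j * c r s) ^+ 2 * (c (2 * (3 * j + s)) (3 * j + s) *
     c (2 * (3 * m + r - (3 * j + s))) (3 * m + r - (3 * j + s)))); first ring.
  transitivity ((c m j * c r s) ^+ 2 * (c (2 * j) j * c (2 * (m - j)) (m - j) *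
     c (2 * s) s * c (2 * (r - s)) (r - s))); last ring.
  by rewrite H0 expr0n !mul0r.
Qed.

Lemma sum3 (F : nat -> 'Z_3) M :
  \sum_(0 <= k < 3 * M) F k = \sum_(0 <= j < M) (F (3 * j) + F (3 * j + 1)%N + F (3 * j + 2)%N).
Proof.
elim: M => [|M IH]; first by rewrite muln0 !big_geq.
have -> : (3 * M.+1 = (3 * M).+3)%N by lia.
rewrite !big_nat_recr //= IH addn1 addn2; ring.
Qed.

Lemma dombT n : domb n = \sum_(0 <= k < n.+1) T n k.
Proof. by []. Qed.

Lemma domb_mul m r : (r < 3)%N ->
  ((domb (3 * m + r))%:R : 'Z_3) = (domb m)%:R * (T r 0 + T r 1 + T r 2)%:R.
Proof.
move=> hr; rewrite !dombT !natr_sum.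
transitivity (\sum_(0 <= k < 3 * m.+1) ((T (3 * m + r) k)%:R : 'Z_3)).
  rewrite (big_cat_nat _ (n := (3 * m + r).+1) (p := 3 * m.+1)) //=; last by lia.
  rewrite [X in _ = _ + X]big1_seq ?addr0 //.
  move=> k /andP [_]; rewrite mem_index_iota => /andP [hk _].
  by rewrite /T bin_small.
rewrite sum3 mulr_suml; apply: eq_bigr => j _.
rewrite -{1}(addn0 (3 * j)) !Tmul // !natrD; ring.
Qed.

End Aux.

Theorem lemma3p3 (n : nat) : domb n = 1 %[mod 3].
Proof.
suff H : (((domb n)%:R : 'Z_3) = 1)%R.
  by rewrite -(val_Zp_nat (p := 3)) // H.
elim/ltn_ind: n => n IH.
case: n IH => [|n] IH; first by rewrite /domb big_nat1; apply/eqP.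
rewrite (divn_eq n.+1 3) mulnC domb_mul ?ltn_mod //.
rewrite IH; last by rewrite ltn_Pdiv.
have : (n.+1 %% 3 < 3)%N by rewrite ltn_mod.
by case: (n.+1 %% 3)%N => [|[|[|]]] //= _; rewrite mul1r; apply/eqP.
Qed.
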